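(* Let $n\ge2$ and consider the test $\mathcal{T}_2$ described below. For every $i\in[n]$, the polynomial $f(x)=x_i$ passes $\mathcal{T}_2$ with probability at least $1-\beta$, where $\beta=1/\log n$.
   Context: The test $\mathcal{T}_2$ takes as input a degree-2 real polynomial $f:\mathbb{R}^n\to\mathbb{R}$. Fix $\beta:=1/\log n$ and $\delta:=2^{-n}$. Generate independent bits $a_1,\dots,a_n\in\{0,1\}$ each with expected value $\beta$ and independent standard Gaussians $g_1,\dots,g_n$; set $r=(a_1g_1,\dots,a_ng_n)$. Pick $i$ uniformly from $\{1,2,\dots,(\log n)^2\}$ and set $t=n^i$; pick a uniform $b\in\{-1,1\}$ (all choices independent). Let $\omega=(1,\dots,1)\in\mathbb{R}^n$ and $y=t^3r+bt^2\delta\omega$. The test accepts (f passes) iff $\mathrm{sign}(f(y))=b$. *)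

(* Defs.v *)
From HB Require Import structures.
From mathcomp Require Import all_boot all_order all_algebra.
From mathcomp Require Import all_classical all_reals all_analysis.
Set Implicit Arguments. Unset Strict Implicit. Unset Printing Implicit Defensive.
Import Order.TTheory GRing.Theory Num.Theory.
Local Open Scope ring_scope.

Definition log2n (R : realType) (n : nat) : R := ln (n%:R : R) / ln 2.
Definition betaT2 (R : realType) (n : nat) : R := (log2n R n)^-1.
Definition deltaT2 (R : realType) (n : nat) : R := (2 : R) ^- n.
(* number of choices for the exponent i : {1, ..., ceil((log n)^2)} *)
Definition KT2 (R : realType) (n : nat) : nat := `|Num.ceil (log2n R n ^+ 2)|%N.

(* Expectation w.r.t. k independent standard Gaussians g_0, ..., g_{k-1}
   (coordinates >= k are set to 0), as an iterated Lebesgue integral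
   against the standard normal probability measure. *)
Fixpoint gauss_iter (R : realType) (k : nat) (F : (nat -> R) -> \bar R) : \bar R :=
  match k with
  | 0 => F (fun _ => 0)
  | k'.+1 => (\int[normal_prob (0:R) 1]_x
                gauss_iter k' (fun g => F (fun j => if j == k' then x else g j)))%E
  end.

Definition bsign (R : realType) (b : bool) : R := if b then 1 else -1.

(* The query point y = t^3 r + b t^2 delta omega, with r_j = a_j g_j. *)
Definition yT2 (R : realType) (n : nat) (a : {ffun 'I_n -> bool}) (g : nat -> R)
  (t : R) (b : bool) : 'I_n -> R :=
  fun j => t ^+ 3 * ((a j)%:R * g j) + bsign R b * t ^+ 2 * deltaT2 R n.

(* Probability that f passes the test T_2:
   a_j ~ Bernoulli(beta) independent, g_j ~ N(0,1) independent,
   i uniform in {1,...,KT2 n}, t = n^i, b uniform in {-1,1};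
   accept iff sign(f(y)) = b. *)
Definition T2_pass_prob (R : realType) (n : nat) (f : ('I_n -> R) -> R) : \bar R :=
  (\sum_(a : {ffun 'I_n -> bool})
     \sum_(i < KT2 R n)
       \sum_(b : bool)
         ((\prod_(j : 'I_n) (if a j then betaT2 R n else 1 - betaT2 R n))
            / (KT2 R n)%:R / 2)%:E *
         gauss_iter n (fun g =>
           ((Num.sg (f (yT2 a g ((n%:R : R) ^+ i.+1) b)) == bsign R b)%:R : R)%:E))%E.

(* Main.v *)
Require Import Defs.
From HB Require Import structures.
From mathcomp Require Import all_boot all_order all_algebra.
From mathcomp Require Import all_classical all_reals all_analysis.
From mathcomp Require Import ring lra.
Import Order.TTheory GRing.Theory Num.Theory.
Local Open Scope ring_scope.

Lemma gauss_iter_ge0 (R : realType) k (F : (nat -> R) -> \bar R) :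
  (forall g, 0 <= F g)%E -> (0 <= gauss_iter k F)%E.
Proof.
elim: k F => [|k IH] F HF /=; first exact: HF.
by apply: integral_ge0 => x _; apply: IH => g; apply: HF.
Qed.

Lemma gauss_iter_cst (R : realType) k (c : \bar R) :
  gauss_iter k (fun _ => c) = c.
Proof.
elim: k => [|k IH] //=.
under eq_integral do rewrite IH.
by rewrite integral_cst //= probability_setT mule1.
Qed.

Lemma log2n_ge1 (R : realType) n : (2 <= n)%N -> 1 <= log2n R n.
Proof.
move=> hn; rewrite /log2n.
have l2 : 0 < ln (2:R) by rewrite ln_gt0 // ltr1n.
rewrite ler_pdivlMr // mul1r.
have h2n : (2:R) <= n%:R by rewrite ler_nat.
rewrite ler_ln ?posrE //; exact: (lt_le_trans _ h2n).
Qed.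

Lemma KT2_gt0 (R : realType) n : (2 <= n)%N -> (0 < KT2 R n)%N.
Proof.
move=> hn; rewrite /KT2.
have h := log2n_ge1 R n hn.
have h2 : 0 < log2n R n ^+ 2 by rewrite exprn_gt0 // (lt_le_trans ltr01).
have : 0 < Num.ceil (log2n R n ^+ 2).
  by rewrite (ceil_gt_int _ 0).
by case: (Num.ceil _) => // m; rewrite absz_nat.
Qed.

Theorem mainTheorem8 (R : realType) (n : nat) (hn : (2 <= n)%N) (i : 'I_n) :
  ((1 - betaT2 R n)%:E <= T2_pass_prob (fun x : 'I_n -> R => x i))%E.
Proof.
have hL := log2n_ge1 R n hn.
have hK := KT2_gt0 R n hn.
set K := KT2 R n in hK *.
set be := betaT2 R n.
have be0 : 0 <= be by rewrite /be /betaT2 invr_ge0 (le_trans ler01).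
have L0 : 0 < log2n R n by exact: (lt_le_trans ltr01).
have be1 : be <= 1 by rewrite /be /betaT2 invf_le1.
have be1' : 0 <= 1 - be by rewrite subr_ge0.
pose Fw (j : 'I_n) (c : bool) : R :=
  if j == i then (if c then 0 else 1 - be) else (if c then be else 1 - be).
pose w' (a : {ffun 'I_n -> bool}) := \prod_j Fw j (a j).
rewrite /T2_pass_prob -/K -/be.
apply: (@le_trans _ _ (\sum_(a : {ffun 'I_n -> bool}) \sum_(k < K) \sum_(b : bool)
   (w' a / K%:R / 2)%:E)%E); last first.
  apply: lee_sum => a _; apply: lee_sum => k _; apply: lee_sum => b _.
  case ha : (a i).
  - have -> : w' a = 0.
      by rewrite /w' (bigD1 i) //= /Fw eqxx ha mul0r.
    rewrite !mul0r mule_ge0 //; last first.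
      by apply: gauss_iter_ge0 => g; rewrite lee_fin ler0n.
    rewrite lee_fin !divr_ge0 ?ler0n //; apply: prodr_ge0 => j _.
    by case: (a j).
  - have -> : w' a = \prod_j (if a j then be else 1 - be).
      apply: eq_bigr => j _; rewrite /Fw; case: eqP => // ->; by rewrite ha.
    suff -> : gauss_iter n (fun g : nat -> R => ((Num.sg ((yT2 a g ((n%:R:R) ^+ k.+1) b) i) ==
            bsign R b)%:R : R)%:E) = 1%E by rewrite mule1.
    have -> : (fun g : nat -> R => ((Num.sg ((yT2 a g ((n%:R:R) ^+ k.+1) b) i) ==
            bsign R b)%:R : R)%:E) = fun _ => 1%:E.
        apply: funext => g; rewrite /yT2 ha mul0r mulr0 add0r.
        rewrite -mulrA sgrM; case: b => /=; rewrite ?sgr1 ?sgrN1 ?mul1r ?mulN1r;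
        rewrite gtr0_sg ?eqxx //; apply: mulr_gt0; rewrite ?exprn_gt0 ?ltr0n
          ?(leq_trans _ hn) //; by rewrite /deltaT2 invr_gt0 exprn_gt0.
    by rewrite gauss_iter_cst.
under eq_bigr do under eq_bigr do rewrite sumEFin.
under eq_bigr do rewrite sumEFin.
rewrite sumEFin lee_fin.
under eq_bigr do under eq_bigr do rewrite big_bool /=.
under eq_bigr do rewrite sumr_const card_ord.
have -> : \sum_(a : {ffun 'I_n -> bool}) (w' a / K%:R / 2 + w' a / K%:R / 2) *+ K
   = \sum_(a : {ffun 'I_n -> bool}) w' a.
  apply: eq_bigr => a _.
  have K0 : (K%:R : R) != 0 by rewrite pnatr_eq0 -lt0n.
  rewrite -mulr_natr.
  by field.
rewrite /w' -(bigA_distr_bigA (fun j c => Fw j c)) (bigD1 i) //= big_bool /Fw eqxx /=.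
rewrite add0r big1 ?mulr1 // => j /negbTE ->.
by rewrite big_bool /= subrKC.
Qed.
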